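(* Consider the iterates $x_k,y_k,u_k$ of the mirror triangle method with inexact directional derivatives (see context). For every $k\ge0$, $x_{k+1}$ and $y_{k+1}$ are convex combinations of $u_0,\dots,u_{k+1}$. Moreover $x_{k+1}=\sum_{l=0}^{k+1}\gamma_{k+1}^lu_l$, where $\gamma_0^0=1$, $\gamma_1^0=0$, $\gamma_1^1=1$, and for $k\ge1$ $$\gamma_{k+1}^l=\begin{cases}\big(1-\frac{\alpha_{k+1}}{A_{k+1}}\big)\gamma_k^l,& l=0,\dots,k-1,\\ \frac{\alpha_{k+1}}{A_{k+1}}\big(1-n\frac{\alpha_k}{A_k}\big)+n\big(\frac{\alpha_k}{A_k}-\frac{\alpha_{k+1}}{A_{k+1}}\big),& l=k,\\ n\frac{\alpha_{k+1}}{A_{k+1}},& l=k+1.\end{cases}$$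
   Context: Here $n\ge1$ is the dimension of $\mathbb{R}^n$ and $\|x\|_L^2=L\sum_ix_i^2$ for some $L>0$. The method: $x_0=u_0=y_0\in\mathbb{R}^n$, $\alpha_0=1-\frac1n$, $A_0=\alpha_0$; for $k\ge0$: $\alpha_{k+1}=\frac{k+2n}{2n^2}$, $A_{k+1}=A_k+\alpha_{k+1}$, $y_{k+1}=\frac{\alpha_{k+1}u_k+A_kx_k}{A_{k+1}}$, $u_{k+1}=\arg\min_{x\in\mathbb{R}^n}\{\frac12\|x-u_k\|_L^2+\alpha_{k+1}\langle g_{k+1},x\rangle\}$ for some vector $g_{k+1}$ (in the method, $g_{k+1}=n(\langle\nabla f(y_{k+1}),e_{k+1}\rangle+\tilde\delta_{k+1})e_{k+1}$), and $x_{k+1}=y_{k+1}+n\frac{\alpha_{k+1}}{A_{k+1}}(u_{k+1}-u_k)$. *)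

(* Defs.v *)
From mathcomp Require Import all_boot all_order all_algebra.
Set Implicit Arguments. Unset Strict Implicit. Unset Printing Implicit Defensive.
Import Order.TTheory GRing.Theory Num.Theory.
Local Open Scope ring_scope.

Section MTM.
Variable R : realFieldType.

Definition alpha (n k : nat) : R :=
  match k with
  | 0 => 1 - (n%:R)^-1
  | k'.+1 => (k'%:R + 2 * n%:R) / (2 * n%:R ^+ 2)
  end.

Fixpoint Acoef (n k : nat) : R :=
  match k with
  | 0 => alpha n 0
  | k'.+1 => Acoef n k' + alpha n k'.+1
  end.

Definition sqnormL (n : nat) (L : R) (v : 'rV[R]_n) : R :=
  L * \sum_(i < n) (v 0 i) ^+ 2.

Definition dotp (n : nat) (g v : 'rV[R]_n) : R := \sum_(i < n) g 0 i * v 0 i.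

Fixpoint gamma (n k : nat) : nat -> R :=
  match k with
  | 0 => fun l => if l == 0%N then 1 else 0
  | k'.+1 =>
    match k' with
    | 0 => fun l => if l == 1%N then 1 else 0
    | _ =>
      let g := gamma n k' in
      fun l =>
        if (l < k')%N then (1 - alpha n k / Acoef n k) * g l
        else if l == k' then
          alpha n k / Acoef n k * (1 - n%:R * (alpha n k' / Acoef n k'))
          + n%:R * (alpha n k' / Acoef n k' - alpha n k / Acoef n k)
        else if l == k then n%:R * (alpha n k / Acoef n k)
        else 0
    end
  end.

End MTM.

(* Main.v *)
Require Import Defs.
From mathcomp Require Import all_boot all_order all_algebra.
From mathcomp Require Import ring lra.
Import Order.TTheory GRing.Theory Num.Theory.
Local Open Scope ring_scope.

Definition Dm {R : realFieldType} (N m : R) := 4 * N^+2 + 4 * m * N + m^+2 + m.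

Lemma Dm_gt0 (R : realFieldType) (N m : R) : 0 < N -> 0 <= m -> 0 < Dm N m.
Proof. move=> h1 h2; rewrite /Dm; nra. Qed.

Lemma Aform (R : realFieldType) n k : (0 < n)%N ->
  Acoef R n k.+1 = Dm n%:R k%:R / (4 * n%:R^+2).
Proof.
move=> n0; have hN : (n%:R : R) != 0 by rewrite pnatr_eq0 -lt0n.
elim: k => [|k IH].
  rewrite /= /Dm; field; exact hN.
have -> : Acoef R n k.+2 = Acoef R n k.+1 + alpha R n k.+2 by [].
rewrite IH /alpha /Dm -addn1 natrD; field; exact hN.
Qed.

Definition tau (R : realFieldType) n k := n%:R * (alpha R n k / Acoef R n k).
Definition bb (R : realFieldType) n k := alpha R n k / Acoef R n k.

Lemma A_gt0 (R : realFieldType) n k : (0 < n)%N -> 0 < Acoef R n k.+1.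
Proof.
move=> n0; have hN : (0:R) < n%:R by rewrite ltr0n.
rewrite Aform //; apply: divr_gt0; first by apply: Dm_gt0; rewrite ?ler0n.
by rewrite mulr_gt0 // exprn_gt0.
Qed.

Lemma tau_form (R : realFieldType) n k : (0 < n)%N ->
  tau R n k.+1 = (4 * n%:R^+2 + 2 * n%:R * k%:R) / Dm n%:R k%:R.
Proof.
move=> n0; have hN : (0:R) < n%:R by rewrite ltr0n.
have hD : Dm (n%:R : R) k%:R != 0 by rewrite gt_eqF // Dm_gt0 // ler0n.
rewrite /tau Aform // /alpha; field; rewrite hD /= pnatr_eq0 -lt0n n0 //.
Qed.

Lemma tau_bounds (R : realFieldType) n k : (0 < n)%N ->
  0 <= tau R n k.+1 <= 1.
Proof.
move=> n0; have hN : (1:R) <= n%:R by rewrite ler1n.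
have hm : (0:R) <= k%:R by rewrite ler0n.
have hD : 0 < Dm (n%:R : R) k%:R by rewrite Dm_gt0 // ?ler0n // ltr0n.
rewrite tau_form //; apply/andP; split.
  apply: divr_ge0; last exact: ltW. nra.
rewrite ler_pdivrMr // mul1r /Dm; nra.
Qed.

Lemma tau_decr (R : realFieldType) n k : (0 < n)%N ->
  tau R n k.+2 <= tau R n k.+1.
Proof.
move=> n0; have hN : (1:R) <= n%:R by rewrite ler1n.
have hm : (0:R) <= k%:R by rewrite ler0n.
have hm1 : (0:R) <= k.+1%:R by rewrite ler0n.
have hD : 0 < Dm (n%:R : R) k%:R by rewrite Dm_gt0 // ?ler0n // ltr0n.
have hD1 : 0 < Dm (n%:R : R) k.+1%:R by rewrite Dm_gt0 // ?ler0n // ltr0n.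
rewrite !tau_form // ler_pdivrMr // [X in _ <= X]mulrAC ler_pdivlMr // -subr_ge0.
set N : R := n%:R; set m : R := k%:R.
have -> : (4 * N ^+ 2 + 2 * N * m) * Dm N k.+1%:R -
  (4 * N ^+ 2 + 2 * N * k.+1%:R) * Dm N m =
  8 * N^+3 + 8 * N^+2 * m + 8 * N^+2 + 2 * N * m^+2 + 2 * N * m.
  rewrite /Dm -addn1 natrD -/m; ring.
have h0 : 0 <= N by rewrite /N ler0n.
by rewrite !addr_ge0 // ?mulr_ge0 // ?exprn_ge0.
Qed.

Lemma A_ge0 (R : realFieldType) n k : (0 < n)%N -> 0 <= Acoef R n k.
Proof.
move=> n0; case: k => [|k]; last exact: ltW (A_gt0 R n k n0).
rewrite /= subr_ge0 invf_le1 ?ler1n // ltr0n //.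
Qed.

Lemma bb_bounds (R : realFieldType) n k : (0 < n)%N ->
  0 <= bb R n k.+1 <= 1.
Proof.
move=> n0; have hA := A_ge0 R n k n0; have hA1 := A_gt0 R n k n0.
have ha : 0 <= alpha R n k.+1.
  rewrite /alpha divr_ge0 // ?addr_ge0 ?mulr_ge0 ?exprn_ge0 ?ler0n //.
rewrite /bb; apply/andP; split; first exact: divr_ge0 (ltW hA1).
rewrite ler_pdivrMr // mul1r.
have -> : Acoef R n k.+1 = Acoef R n k + alpha R n k.+1 by [].
lra.
Qed.


Lemma sum2r (V : nmodType) (F : nat -> V) k :
  \sum_(l < k.+2) F l = \sum_(l < k) F l + F k + F k.+1.
Proof. by rewrite !big_ord_recr. Qed.

Lemma sum1r (V : nmodType) (F : nat -> V) k :
  \sum_(l < k.+1) F l = \sum_(l < k) F l + F k.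
Proof. by rewrite !big_ord_recr. Qed.

Lemma tau1 (R : realFieldType) n : (0 < n)%N -> tau R n 1 = 1.
Proof.
move=> n0; have hN : (n%:R : R) != 0 by rewrite pnatr_eq0 -lt0n.
rewrite tau_form // /Dm; field; rewrite hN /= //.

Qed.

Lemma gammaS (R : realFieldType) n k l : gamma R n k.+2 l =
  if (l < k.+1)%N then (1 - bb R n k.+2) * gamma R n k.+1 l
  else if l == k.+1 then bb R n k.+2 * (1 - tau R n k.+1) + n%:R * (bb R n k.+1 - bb R n k.+2)
  else if l == k.+2 then tau R n k.+2 else 0.
Proof. by []. Qed.

Lemma gamma_out (R : realFieldType) n k l : (k < l)%N -> gamma R n k l = 0.
Proof.
case: k => [|[|k]] hl /=.
- by rewrite gtn_eqF.
- by rewrite gtn_eqF.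
rewrite -/(gamma R n k.+2 l) gammaS ltnNge (ltnW (ltnW hl)) /= gtn_eqF ?(ltnW hl) // gtn_eqF //.
Qed.

Lemma gamma_diag (R : realFieldType) n k : (0 < n)%N -> gamma R n k.+1 k.+1 = tau R n k.+1.
Proof.
move=> n0; case: k => [|k]; first by rewrite tau1.
by rewrite gammaS ltnNge leqnSn /= gtn_eqF // eqxx.
Qed.

Lemma gamma_facts (R : realFieldType) n k : (0 < n)%N ->
  (forall l, 0 <= gamma R n k l) /\ \sum_(l < k.+1) gamma R n k l = 1.
Proof.
move=> n0; elim: k => [|k IH].
  split; first by move=> l /=; case: (l == 0%N).
  by rewrite big_ord1.
case: k IH => [|k] [IH1 IH2].
  split; first by move=> l /=; case: (l == 1%N).
  by rewrite !big_ord_recr big_ord0 /= add0r add0r.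
have hb := bb_bounds R n k.+1 n0; have ht := tau_bounds R n k n0.
have htd := tau_decr R n k n0.
have htt : n%:R * (bb R n k.+1 - bb R n k.+2) = tau R n k.+1 - tau R n k.+2.
  by rewrite /tau /bb mulrBr.
have ht' := tau_bounds R n k.+1 n0.
split.
  move=> l; rewrite gammaS; case: ifP => _.
    apply: mulr_ge0 => //; lra.
  case: ifP => _; first by rewrite htt; nra.
  by case: ifP => _ //; lra.
rewrite (sum2r _ (gamma R n k.+2)).
rewrite (eq_bigr (fun i : 'I_k.+1 => (1 - bb R n k.+2) * gamma R n k.+1 i)); last first.
  by move=> i _; rewrite gammaS ltn_ord.
rewrite -mulr_sumr.
move: IH2; rewrite (sum1r _ (gamma R n k.+1)) gamma_diag // => IH2.
have -> : \sum_(i < k.+1) gamma R n k.+1 i = 1 - tau R n k.+1 by rewrite -IH2 addrK.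
rewrite gammaS ltnn eqxx gamma_diag // htt.
ring.
Qed.

Lemma ind_sum (R : realFieldType) (V : lmodType R) (F : nat -> V) k :
  \sum_(l < k.+1) ((nat_of_ord l == k)%:R : R) *: F l = F k.
Proof.
rewrite (sum1r _ (fun l => ((l == k)%:R : R) *: F l)) eqxx scale1r big1 ?add0r //.
by move=> i _; rewrite ltn_eqF ?ltn_ord // scale0r.
Qed.

Lemma ind_sum1 (R : realFieldType) k :
  \sum_(l < k.+1) ((nat_of_ord l == k)%:R : R) = 1.
Proof.
rewrite (sum1r _ (fun l => ((l == k)%:R : R))) eqxx big1 ?add0r //.
by move=> i _; rewrite ltn_eqF ?ltn_ord.
Qed.

Theorem lemma12 (R : realFieldType) (n : nat) (L : R)
  (x y u g : nat -> 'rV[R]_n) :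
  (0 < n)%N -> 0 < L ->
  x 0%N = u 0%N -> y 0%N = u 0%N ->
  (forall k : nat,
     y k.+1 = (Acoef R n k.+1)^-1 *:
                (alpha R n k.+1 *: u k + Acoef R n k *: x k)) ->
  (forall (k : nat) (z : 'rV[R]_n),
     2^-1 * sqnormL L (u k.+1 - u k) + alpha R n k.+1 * dotp (g k.+1) (u k.+1)
     <= 2^-1 * sqnormL L (z - u k) + alpha R n k.+1 * dotp (g k.+1) z) ->
  (forall k : nat,
     x k.+1 = y k.+1 + (n%:R * (alpha R n k.+1 / Acoef R n k.+1)) *: (u k.+1 - u k)) ->
  forall k : nat,
    [/\ (exists w : nat -> R,
           [/\ forall l : nat, (l <= k.+1)%N -> 0 <= w l,
               \sum_(l < k.+2) w l = 1
             & x k.+1 = \sum_(l < k.+2) w l *: u l]),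
        (exists w : nat -> R,
           [/\ forall l : nat, (l <= k.+1)%N -> 0 <= w l,
               \sum_(l < k.+2) w l = 1
             & y k.+1 = \sum_(l < k.+2) w l *: u l])
      & x k.+1 = \sum_(l < k.+2) gamma R n k.+1 l *: u l].
Proof.
move=> n0 L0 hx0 hy0 hy _ hx.
have xrep : forall k, x k = \sum_(l < k.+1) gamma R n k l *: u l.
  elim=> [|k IH]; first by rewrite big_ord1 /= scale1r.
  case: k IH => [|k] IH.
    rewrite (sum2r _ (fun l => gamma R n 1 l *: u l)) big_ord0 add0r.
    rewrite [gamma R n 1 0]/= [gamma R n 1 1]/= scale0r add0r scale1r.
    rewrite hx -/(tau R n 1) tau1 // hy hx0.
    have eA : Acoef R n 1 = Acoef R n 0 + alpha R n 1 by [].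
    have hA : Acoef R n 1 != 0 by rewrite gt_eqF // A_gt0.
    move: hA; rewrite eA => hA.
    apply/rowP => j; rewrite !mxE; field; exact hA.
  rewrite (sum2r _ (fun l => gamma R n k.+2 l *: u l)).
  rewrite (eq_bigr (fun i : 'I_k.+1 => (1 - bb R n k.+2) *: (gamma R n k.+1 i *: u i))); last first.
    by move=> i _; rewrite gammaS ltn_ord scalerA.
  rewrite -scaler_sumr.
  move: IH; rewrite (sum1r _ (fun l => gamma R n k.+1 l *: u l)) gamma_diag // => IH.
  rewrite gammaS ltnn eqxx gamma_diag //.
  rewrite hx hy IH.
  set S := \sum_(i < k.+1) _.
  rewrite /tau /bb.
  have eA : Acoef R n k.+2 = Acoef R n k.+1 + alpha R n k.+2 by [].
  have hA : Acoef R n k.+2 != 0 by rewrite gt_eqF // A_gt0.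
  have hA1 : Acoef R n k.+1 != 0 by rewrite gt_eqF // A_gt0.
  move: hA; rewrite eA => hA.
  apply/rowP => j; rewrite !mxE; field; rewrite hA hA1 //.
move=> k; have [gpos gsum] := gamma_facts R n k.+1 n0.
split; last exact: xrep.
  by exists (gamma R n k.+1); split; [move=> l _; exact: gpos | exact: gsum | exact: xrep].
have [gpos' gsum'] := gamma_facts R n k n0.
have hb := bb_bounds R n k n0.
set b := bb R n k.+1.
exists (fun l => (1 - b) * gamma R n k l + b * (l == k)%:R).
split.
- move=> l _; case/andP: hb => hb1 hb2.
  by apply: addr_ge0; apply: mulr_ge0 => //; rewrite ?ler0n ?subr_ge0.
- rewrite big_ord_recr /=.
  rewrite gamma_out // gtn_eqF // mulr0 mulr0 addr0 addr0.
  rewrite big_split /= -!mulr_sumr gsum' ind_sum1; ring.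
- rewrite big_ord_recr /=.
  rewrite gamma_out // gtn_eqF // mulr0 mulr0 addr0 scale0r addr0.
  rewrite (eq_bigr (fun i : 'I_k.+1 => (1 - b) *: (gamma R n k i *: u i)
      + b *: (((nat_of_ord i == k)%:R : R) *: u i))); last first.
    by move=> i _; rewrite [LHS]scalerDl !scalerA.
  rewrite big_split /= -!scaler_sumr ind_sum -xrep hy.
  rewrite /b /bb.
  have eA : Acoef R n k.+1 = Acoef R n k + alpha R n k.+1 by [].
  have hA : Acoef R n k.+1 != 0 by rewrite gt_eqF // A_gt0.
  move: hA; rewrite eA => hA.
  apply/rowP => j; rewrite !mxE; field; exact hA.
Qed.
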